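(* Let $T:\mathbb{R}_+^N\to\mathbb{R}_{++}^N$ be a standard interference mapping, let $\|\cdot\|_a$ be a monotone norm on $\mathbb{R}^N$, and for each $\bar p>0$ let $(\mathbf{p}_{\bar p},c_{\bar p})$ be the unique solution of the problem described in the context, with $\lambda_{\bar p}:=1/c_{\bar p}$. Let $T_\infty$ be the asymptotic mapping of $T$. Then: (i) The limit $\lambda_\infty:=\lim_{\bar p\to\infty}\lambda_{\bar p}\ge 0$ exists. (ii) Assume in addition that $T$ is continuous. Let $(\bar p_n)_{n\in\mathbb{N}}\subset\mathbb{R}_{++}$ be any monotonically increasing sequence with $\bar p_n\to\infty$, and set $\mathbf{x}_n:=\mathbf{p}_{\bar p_n}/\|\mathbf{p}_{\bar p_n}\|_a$. If $\mathbf{x}_\infty\in\mathbb{R}_+^N$ is an accumulation point of the bounded sequence $(\mathbf{x}_n)_{n\in\mathbb{N}}$, then $(\mathbf{x}_\infty,\lambda_\infty)$ solves the problem: find $(\mathbf{x},\lambda)\in\mathbb{R}_+^N\times\mathbb{R}_+$ with $T_\infty(\mathbf{x})=\lambda\mathbf{x}$ and $\|\mathbf{x}\|_a=1$. (iii) Under the assumptions and notation of (ii), if the problem ''find $(\mathbf{x},\lambda)\in\mathbb{R}_+^N\times\mathbb{R}_+$ with $T_\infty(\mathbf{x})=\lambda\mathbf{x}$ and $\|\mathbf{x}\|_a=1$'' has a unique solution $(\mathbf{x}',\lambda')$, and it lies in $\mathbb{R}_{++}^N\times\mathbb{R}_{++}$, then $\lim_{n\to\infty}\mathbf{x}_n=\mathbf{x}'$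 (so $\mathbf{x}_\infty=\mathbf{x}'$) and $\lambda'=\lambda_\infty$.
   Context: Vector inequalities are coordinatewise; $\mathbb{R}_+$, $\mathbb{R}_{++}$ denote nonnegative and positive reals. A norm $\|\cdot\|$ on $\mathbb{R}^N$ is monotone if $\mathbf{0}\le\mathbf{x}\le\mathbf{y}$ implies $\|\mathbf{x}\|\le\|\mathbf{y}\|$. A function $f:\mathbb{R}^N\to\mathbb{R}_{++}\cup\{\infty\}$ is a standard interference function if: (1) for all $\mathbf{x}\in\mathbb{R}_+^N$ and all $\alpha>1$, $\alpha f(\mathbf{x})>f(\alpha\mathbf{x})$; (2) for all $\mathbf{x}_1,\mathbf{x}_2\in\mathbb{R}_+^N$, $\mathbf{x}_1\ge\mathbf{x}_2$ implies $f(\mathbf{x}_1)\ge f(\mathbf{x}_2)$; (3) $f(\mathbf{x})=\infty$ iff $\mathbf{x}\notin\mathbb{R}_+^N$. A standard interference mapping is $T:\mathbb{R}_+^N\to\mathbb{R}_{++}^N$, $T(\mathbf{x})=(t_1(\mathbf{x}),\dots,t_N(\mathbf{x}))$, with each $t_i$ a standard interference function. For a proper function $f:\mathbb{R}^N\to\mathbb{R}\cup\{\infty\}$, its asymptotic function is $f_\infty(\mathbf{x})=\inf\{\liminf_{n\to\infty} f(h_n\mathbf{x}_n)/h_n : h_n\to\infty,\ \mathbf{x}_n\to\mathbf{x}\}$. The asymptotic mapping of $T$ is $T_\infty(\mathbf{x})=((t_1)_\infty(\mathbf{x}),\dots,(t_N)_\infty(\mathbf{x}))$ on $\mathbb{R}_+^N$.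 For a power budget $\bar p>0$, consider the problem: maximize $c$ over $(\mathbf{p},c)\in\mathbb{R}_+^N\times\mathbb{R}_{++}$ subject to $\mathbf{p}=cT(\mathbf{p})$ and $\|\mathbf{p}\|_a\le\bar p$. It is known that this problem has a unique solution $(\mathbf{p}_{\bar p},c_{\bar p})\in\mathbb{R}_{++}^N\times\mathbb{R}_{++}$, that it satisfies $T(\mathbf{p}_{\bar p})=(1/c_{\bar p})\mathbf{p}_{\bar p}$ and $\|\mathbf{p}_{\bar p}\|_a=\bar p$, and that $\bar p\mapsto c_{\bar p}$ is strictly increasing. *)

(* Defs.v *)
From HB Require Import structures.
From mathcomp Require Import all_boot all_order all_algebra.
From mathcomp Require Import all_classical all_reals all_analysis.
Set Implicit Arguments. Unset Strict Implicit. Unset Printing Implicit Defensive.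
Import Order.TTheory GRing.Theory Num.Theory.
Import numFieldNormedType.Exports.
Local Open Scope classical_set_scope.
Local Open Scope ring_scope.

(* Vectors of R^N are row vectors 'rV[R]_N; the i-th coordinate of x is x 0 i. *)

Section Defs.
Context {R : realType} {N : nat}.

Definition nonneg (x : 'rV[R]_N) : Prop := forall i, 0 <= x 0 i.
Definition positive (x : 'rV[R]_N) : Prop := forall i, 0 < x 0 i.
Definition vle (x y : 'rV[R]_N) : Prop := forall i, x 0 i <= y 0 i.

Definition monotone_norm (na : 'rV[R]_N -> R) : Prop :=
  [/\ forall x, na x = 0 -> x = 0,
      forall (a : R) x, na (a *: x) = `|a| * na x,
      forall x y, na (x + y) <= na x + na y &
      forall x y, nonneg x -> vle x y -> na x <= na y].

(* A standard interference function, given by its (finite, positive)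
   values on R_+^N; its value is +oo outside R_+^N (see ext_fun). *)
Definition standard_interference (f : 'rV[R]_N -> R) : Prop :=
  [/\ forall x, nonneg x -> 0 < f x,
      forall x (alpha : R), nonneg x -> 1 < alpha -> f (alpha *: x) < alpha * f x &
      forall x1 x2, nonneg x2 -> vle x2 x1 -> f x2 <= f x1].

Definition ext_fun (f : 'rV[R]_N -> R) (x : 'rV[R]_N) : \bar R :=
  if `[< nonneg x >] then (f x)%:E else +oo%E.

Definition asymptotic_fun (f : 'rV[R]_N -> R) (x : 'rV[R]_N) : \bar R :=
  ereal_inf [set v : \bar R | exists (h : R^nat) (xs : nat -> 'rV[R]_N),
    [/\ h @ \oo --> +oo, xs @ \oo --> x &
        v = limn_einf (fun n => (ext_fun f (h n *: xs n) * ((h n)^-1)%:E)%E)]].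

Definition standard_interference_mapping (T : 'rV[R]_N -> 'rV[R]_N) : Prop :=
  forall i, standard_interference (fun x => T x 0 i).

Definition asymptotic_mapping (T : 'rV[R]_N -> 'rV[R]_N) (x : 'rV[R]_N) (i : 'I_N)
  : \bar R := asymptotic_fun (fun y => T y 0 i) x.

Definition feasible (T : 'rV[R]_N -> 'rV[R]_N) (na : 'rV[R]_N -> R) (pb : R)
  (p : 'rV[R]_N) (c : R) : Prop :=
  [/\ nonneg p, 0 < c, p = c *: T p & na p <= pb].

Definition solves_budget (T : 'rV[R]_N -> 'rV[R]_N) (na : 'rV[R]_N -> R) (pb : R)
  (p : 'rV[R]_N) (c : R) : Prop :=
  feasible T na pb p c /\ (forall p' c', feasible T na pb p' c' -> c' <= c).

Definition solves_asymptotic (T : 'rV[R]_N -> 'rV[R]_N) (na : 'rV[R]_N -> R)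
  (x : 'rV[R]_N) (lam : R) : Prop :=
  [/\ nonneg x, 0 <= lam, na x = 1 &
      forall i, asymptotic_mapping T x i = (lam * x 0 i)%:E].

End Defs.

(* Main.v *)
Require Import Defs.
From HB Require Import structures.
From mathcomp Require Import all_boot all_order all_algebra.
From mathcomp Require Import all_classical all_reals all_analysis.
From mathcomp Require Import ring lra.
Import Order.TTheory GRing.Theory Num.Theory.
Import numFieldNormedType.Exports.
Local Open Scope classical_set_scope.
Local Open Scope ring_scope.
Set Implicit Arguments. Unset Strict Implicit. Unset Printing Implicit Defensive.

Lemma einf_ge (R : realType) (u : (\bar R)^nat) (c : \bar R) :
  (\forall n \near \oo, (c <= u n)%E) -> (c <= limn_einf u)%E.
Proof.
move=> [n0 _ H]; rewrite limn_einf_lim; apply: lime_ge; first exact: is_cvg_einfs.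
exists n0 => // n /= n0n; apply: le_ereal_inf_tmp => _ [k /= nk <-].
by apply: H; rewrite /= (leq_trans n0n nk).
Qed.

Lemma einf_le (R : realType) (u : (\bar R)^nat) (c : \bar R) :
  (\forall n \near \oo, (u n <= c)%E) -> (limn_einf u <= c)%E.
Proof.
move=> [n0 _ H]; rewrite limn_einf_lim; apply: lime_le; first exact: is_cvg_einfs.
exists n0 => // n /= n0n; apply: le_trans (H n n0n).
by apply: ereal_inf_lbound; exists n => /=.
Qed.

Lemma helper_ub (R : realType) (v : \bar R) (b K : R) : 0 <= K ->
  (forall e, 0 < e -> e < 1 -> (v <= (b + e * K)%:E)%E) -> (v <= b%:E)%E.
Proof.
move=> K0 H; apply/lee_addgt0Pr => d d0.
set eps := Num.min (2^-1) (d / (K + 1)).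
have K1 : 0 < K + 1 by lra.
have e0 : 0 < eps by rewrite lt_min invr_gt0 ltr0n divr_gt0.
have e1 : eps < 1 by rewrite gt_min; apply/orP; left; lra.
have e2 : eps * (K + 1) <= d.
  by rewrite -ler_pdivlMr // ge_min lexx orbT.
apply: le_trans (H eps e0 e1) _; rewrite -EFinD lee_fin lerD2l.
by nra.
Qed.

Lemma helper_real (R : realType) (a b K : R) : 0 <= K ->
  (forall e, 0 < e -> e < 1 -> a <= b + e * K) -> a <= b.
Proof.
move=> K0 H; rewrite -lee_fin; apply: helper_ub K0 _ => e e0 e1.
by rewrite lee_fin; apply: H.
Qed.

Lemma helper_lb (R : realType) (v : \bar R) (a : R) : 0 <= a ->
  (forall e, 0 < e -> e < 1 -> (((1 - e) * a)%:E <= v)%E) -> (a%:E <= v)%E.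
Proof.
move=> a0; case: v => [r| |] H; last 2 first.
- exact: leey.
- have := H (2^-1) ltac:(lra) ltac:(lra); by rewrite leeNy_eq.
rewrite lee_fin; apply: (helper_real a0) => e e0 e1.
have := H e e0 e1; rewrite lee_fin; lra.
Qed.

Section Gen.
Context {R : realType} {N : nat}.
Implicit Types (x y : 'rV[R]_N).

Lemma nonnegZ x (h : R) : nonneg x -> 0 <= h -> nonneg (h *: x).
Proof. by move=> Hx h0 j; rewrite mxE mulr_ge0. Qed.

Lemma vleZ x y (h : R) : vle x y -> 0 <= h -> vle (h *: x) (h *: y).
Proof. by move=> Hx h0 j; rewrite !mxE ler_wpM2l. Qed.

Lemma ratio_dec (f : 'rV[R]_N -> R) x (h1 h2 : R) :
  standard_interference f -> nonneg x -> 0 < h1 -> h1 <= h2 ->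
  f (h2 *: x) / h2 <= f (h1 *: x) / h1.
Proof.
move=> [fpos fsc fmon] Hx h10; rewrite le_eqVlt => /orP[/eqP<-//|h12].
have h20 : 0 < h2 by apply: lt_trans h12.
have a1 : 1 < h2 / h1 by rewrite ltr_pdivlMr // mul1r.
have := fsc (h1 *: x) (h2 / h1) (nonnegZ Hx (ltW h10)) a1.
rewrite scalerA mulrVK ?unitfE ?gt_eqF //.
move=> /ltW H; rewrite ler_pdivrMr //; apply: (le_trans H).
by rewrite le_eqVlt; apply/orP; left; apply/eqP; ring.
Qed.

Lemma nbhs_coord (v : 'rV[R]_N) (j : 'I_N) (e : R) : 0 < e ->
  \forall y \near v, `|(y : 'rV[R]_N) 0 j - v 0 j| < e.
Proof.
move=> e0; have := @coord_continuous R 1 N 0 j v.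
move/cvgrPdist_lt/(_ e e0); apply: filterS => y; by rewrite distrC.
Qed.

Variable na : 'rV[R]_N -> R.
Hypothesis Hna : monotone_norm na.

Lemma na0 : na 0 = 0.
Proof.
case: Hna => _ hom _ _; have := hom 0 0; rewrite scale0r normr0 mul0r; exact.
Qed.

Lemma na_ge0 x : 0 <= na x.
Proof.
case: Hna => _ hom tri _; have := tri x ((-1) *: x).
have := hom (-1) x; rewrite scaleN1r normrN normr1 mul1r => ->.
rewrite subrr na0; lra.
Qed.

Lemma naZ x (h : R) : 0 <= h -> na (h *: x) = h * na x.
Proof. by case: Hna => _ hom _ _ h0; rewrite hom ger0_norm. Qed.

Lemma na_mono x y : nonneg x -> vle x y -> na x <= na y.
Proof. by case: Hna => _ _ _ mon; apply: mon. Qed.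

Lemma na_tri x y : na (x + y) <= na x + na y.
Proof. by case: Hna => _ _ tri _; apply: tri. Qed.

Lemma na_delta_gt0 (j : 'I_N) : 0 < na (delta_mx 0 j).
Proof.
rewrite lt_neqAle na_ge0 andbT; apply/eqP => /esym H.
case: Hna => H0 _ _ _; have := H0 _ H => /matrixP /(_ 0 j).
by rewrite !mxE !eqxx /= => /eqP; rewrite oner_eq0.
Qed.

Lemma coord_bound x j : nonneg x -> na x = 1 -> x 0 j <= (na (delta_mx 0 j))^-1.
Proof.
move=> Hx Hn; have dp := na_delta_gt0 j.
rewrite -[X in _ <= X]mul1r ler_pdivlMr // -Hn -naZ //; apply: na_mono.
  by apply: nonnegZ => // k; rewrite mxE; case: eqP => //= _; case: eqP.
move=> k; rewrite !mxE; case: (k =P j) => [->|jk]; rewrite ?eqxx ?mulr1 //.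
by rewrite /= mulr0; apply: Hx.
Qed.

End Gen.

Section Main.
Context {R : realType} {N : nat} (T : 'rV[R]_N -> 'rV[R]_N) (na : 'rV[R]_N -> R)
  (pp : R -> 'rV[R]_N) (cc : R -> R).
Hypothesis HT : standard_interference_mapping T.
Hypothesis Hna : monotone_norm na.
Hypothesis Hf : forall pb, 0 < pb ->
  [/\ positive (pp pb), 0 < cc pb, T (pp pb) = (cc pb)^-1 *: pp pb & na (pp pb) = pb].
Hypothesis Hm : forall pb1 pb2, 0 < pb1 -> pb1 < pb2 -> cc pb1 < cc pb2.

Let lam pb := (cc pb)^-1.
Let lset := [set lam pb | pb in [set pb : R | 0 < pb]].
Let l := inf lset.

Lemma lam_gt0 pb : 0 < pb -> 0 < lam pb.
Proof. by move=> /Hf[_ c0 _ _]; rewrite /lam invr_gt0. Qed.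

Lemma lam_dec pb1 pb2 : 0 < pb1 -> pb1 <= pb2 -> lam pb2 <= lam pb1.
Proof.
move=> p0; rewrite le_eqVlt => /orP[/eqP->//|p12].
have [_ c1 _ _] := Hf p0.
have [_ c2 _ _] := Hf (lt_trans p0 p12).
by rewrite /lam lef_pV2 ?posrE //; exact: ltW (Hm p0 p12).
Qed.

Lemma lset_lb : has_lbound lset.
Proof. by exists 0 => _ [pb /= pb0 <-]; exact: ltW (lam_gt0 pb0). Qed.

Lemma lset_ne : lset !=set0.
Proof. by exists (lam 1), 1 => //=. Qed.

Lemma l_ge0 : 0 <= l.
Proof. by apply: lb_le_inf lset_ne _ => _ [pb pb0 <-]; exact: ltW (lam_gt0 pb0). Qed.

Lemma l_le pb : 0 < pb -> l <= lam pb.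
Proof. by move=> pb0; apply: ge_inf lset_lb _ _; exists pb. Qed.

Lemma l_adh e : 0 < e ->
  exists2 pb0, 0 < pb0 & forall pb, pb0 <= pb -> lam pb < l + e.
Proof.
move=> e0; have [_ [pb0 pb00 <-] H] := inf_adherent e0 (conj lset_ne lset_lb).
by exists pb0 => // pb hp; apply: le_lt_trans (lam_dec pb00 hp) H.
Qed.

Lemma lam_cvg : lam pb @[pb --> +oo] --> l.
Proof.
apply/cvgrPdist_lt => e e0.
have [pb0 pb00 H] := l_adh e0.
near=> pb.
have pbpos : 0 < pb by near: pb; apply: nbhs_pinfty_gt; rewrite num_real.
have hge : pb0 <= pb by near: pb; apply: nbhs_pinfty_ge; rewrite num_real.
have := l_le pbpos; have := H _ hge.
move=> h1 h2; rewrite distrC ger0_norm ?subr_ge0 //; lra.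
Unshelve. all: by end_near.
Qed.

Lemma lim_lam : lim (lam pb @[pb --> +oo]) = l.
Proof. exact: cvg_lim lam_cvg. Qed.


Section Seq.
Variable pbar : nat -> R.
Hypothesis pbar0 : forall n, 0 < pbar n.
Hypothesis pbar_oo : pbar @ \oo --> +oo.
Let xs n := (na (pp (pbar n)))^-1 *: pp (pbar n).

Lemma xs_scale n : pbar n *: xs n = pp (pbar n).
Proof.
rewrite /xs; have [_ _ _ ->] := Hf (pbar0 n).
by rewrite scalerA mulfV ?scale1r // gt_eqF.
Qed.

Lemma xs_nonneg n : nonneg (xs n).
Proof.
have [Hp _ _ Hn] := Hf (pbar0 n).
move=> j; rewrite /xs mxE Hn mulr_ge0 ?invr_ge0 ?ltW //.
Qed.

Lemma xs_na n : na (xs n) = 1.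
Proof.
have [_ _ _ Hn] := Hf (pbar0 n).
by rewrite /xs (naZ Hna) ?Hn ?mulVf ?gt_eqF // invr_ge0 ltW.
Qed.

Lemma xs_T n i : T (pbar n *: xs n) 0 i = lam (pbar n) * (pbar n * xs n 0 i).
Proof.
rewrite xs_scale; have [_ _ -> _] := Hf (pbar0 n).
by rewrite mxE -xs_scale mxE.
Qed.

Lemma clu_ex x (P : nat -> Prop) (Q : 'rV[R]_N -> Prop) : cluster (xs @ \oo) x ->
  (\forall n \near \oo, P n) -> (\forall y \near x, Q y) -> exists n, P n /\ Q (xs n).
Proof.
move=> Hc HP HQ.
have : (xs @ \oo) [set y | exists n, P n /\ xs n = y].
  by apply: filterS HP => n Pn; exists n.
move=> /(Hc _ _) /(_ HQ) [y [[n [Pn <-]] Qy]].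
by exists n.
Qed.

Section Clu.
Variable X : 'rV[R]_N.
Hypothesis HX : nonneg X.
Hypothesis HcX : cluster (xs @ \oo) X.

Lemma nb_rel e : 0 < e -> e < 1 -> \forall y \near X, forall j,
  `|(y : 'rV[R]_N) 0 j - X 0 j| < e /\
  (0 <= y 0 j -> (1 - e) * X 0 j <= y 0 j /\ X 0 j <= (1 + e) * y 0 j).
Proof.
move=> e0 e1.
apply: (@filter_forall _ _ (fun j (y : 'rV[R]_N) => `|y 0 j - X 0 j| < e /\
  (0 <= y 0 j -> (1 - e) * X 0 j <= y 0 j /\ X 0 j <= (1 + e) * y 0 j)) (nbhs X) _) => j.
have := HX j; rewrite le_eqVlt => /orP[/eqP X0 | Xp].
  apply: filterS (nbhs_coord X j e0) => y Hy; split => // y0.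
  by rewrite -X0 mulr0; split => //; apply: mulr_ge0 => //; lra.
have e2 : 0 < e * X 0 j / 2 by rewrite divr_gt0 ?mulr_gt0.
near=> y.
have h1 : `|(y : 'rV[R]_N) 0 j - X 0 j| < e by near: y; exact: nbhs_coord.
have h2 : `|(y : 'rV[R]_N) 0 j - X 0 j| < e * X 0 j / 2 by near: y; exact: nbhs_coord.
split => // _; move: h2; rewrite ltr_norml => /andP[a b].
split; nra.
Unshelve. all: by end_near.
Qed.

Lemma ii_na : na X = 1.
Proof.
apply/eqP; rewrite eq_le; apply/andP; split.
  apply: (@helper_real _ _ _ 1) => // e e0 e1.
  have [n [_ Hn]] := clu_ex (P := fun _ => True) HcX (@filterT _ _ _) (nb_rel e0 e1).
  have : na X <= na ((1 + e) *: xs n).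
    apply: (na_mono Hna) => // j; rewrite mxE; have := Hn j => -[_ /(_ (xs_nonneg n j))[]] //.
  rewrite (naZ Hna) ?xs_na; lra.
set ones : 'rV[R]_N := const_mx 1.
apply: (@helper_real _ _ _ (na ones)); first exact: na_ge0.
move=> e e0 e1.
have [n [_ Hn]] := clu_ex (P := fun _ => True) HcX (@filterT _ _ _) (nb_rel e0 e1).
have : na (xs n) <= na (X + e *: ones).
  apply: (na_mono Hna); first exact: xs_nonneg.
  move=> j; have := Hn j => -[+ _]; rewrite ltr_norml => /andP[a b].
  set v := xs n 0 j in a b *; rewrite !mxE mulr1; lra.
have := na_tri Hna X (e *: ones); rewrite (naZ Hna _ (ltW e0)) xs_na; lra.
Qed.

Hypothesis Hcont : {within [set x | nonneg x], continuous T}.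

Lemma cont_near (h : R) (i : 'I_N) (e : R) : 0 < h -> 0 < e ->
  \forall y \near X, nonneg y -> `|T (h *: y) 0 i - T (h *: X) 0 i| < e.
Proof.
move=> h0 e0.
have Hz : nonneg (h *: X) by apply: nonnegZ => //; exact: ltW.
have H := (subspace_continuousP _ T).1 Hcont (h *: X) Hz.
have := H _ (nbhs_coord (T (h *: X)) i e0).
rewrite nbhs_simpl /= => H2.
have := @scaler_continuous _ _ h X _ H2.
move=> H3.
have H4 : \forall y \near X, nonneg (h *: (y : 'rV[R]_N)) -> `|T (h *: y) 0 i - T (h *: X) 0 i| < e := H3.
apply: filterS H4 => y Hy ynn; apply: Hy.
by apply: nonnegZ => //; exact: ltW.
Qed.

Lemma ii_lower (i : 'I_N) (h : R) : 0 < h -> l * X 0 i <= T (h *: X) 0 i / h.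
Proof.
move=> h0.
have K0 : 0 <= l + h^-1 by apply: addr_ge0; [exact: l_ge0 | rewrite invr_ge0 ltW].
apply: (helper_real K0) => e e0 e1.
have [n [hn [Hn1 Hn2]]] : exists n, h <= pbar n /\
    ((nonneg (xs n) -> `|T (h *: xs n) 0 i - T (h *: X) 0 i| < e) /\
     `|xs n 0 i - X 0 i| < e).
  apply: (clu_ex (P := fun n => h <= pbar n) (Q := fun y =>
    (nonneg y -> `|T (h *: y) 0 i - T (h *: X) 0 i| < e) /\ `|y 0 i - X 0 i| < e)
    HcX ((cvgryPge _).1 pbar_oo h)).
  exact: filterI (cont_near i h0 e0) (nbhs_coord X i e0).
have Hn1' := Hn1 (xs_nonneg n).
have Hr := ratio_dec (HT i) (xs_nonneg n) h0 hn.
rewrite /= xs_T in Hr.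
have pn := pbar0 n.
have Hl := l_le pn.
have xn0 := xs_nonneg n i.
set A := T (h *: xs n) 0 i in Hn1' Hr.
set B := T (h *: X) 0 i in Hn1' *.
set L := lam (pbar n) in Hr Hl.
set v := xs n 0 i in Hr Hn2 xn0.
have E : L * (pbar n * v) / pbar n = L * v by field; rewrite gt_eqF.
rewrite E in Hr.
move: Hn1' Hn2; rewrite !ltr_norml => /andP[a1 a2] /andP[b1 b2].
have hi0 : 0 < h^-1 by rewrite invr_gt0.
have l0 := l_ge0.
nra.
Qed.

Lemma ii_upper (i : 'I_N) (e : R) : 0 < e -> e < 1 ->
  exists2 h0, 0 < h0 & T (h0 *: X) 0 i / h0 <= (1 + e) * (l + e) * (X 0 i + e).
Proof.
move=> e0 e1.
have [pb0 pb00 Hpb] := l_adh e0.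
have [n [Hn1 Hn2]] : exists n, lam (pbar n) < l + e /\
    (forall j, `|xs n 0 j - X 0 j| < e /\
      (0 <= xs n 0 j -> (1 - e) * X 0 j <= xs n 0 j /\ X 0 j <= (1 + e) * xs n 0 j)).
  apply: (clu_ex (P := fun n => lam (pbar n) < l + e) HcX _ (nb_rel e0 e1)).
  by apply: filterS ((cvgryPge _).1 pbar_oo pb0) => n; apply: Hpb.
have pn := pbar0 n.
have e10 : 0 < 1 + e by lra.
set h0 := pbar n / (1 + e).
have h00 : 0 < h0 by rewrite divr_gt0.
exists h0 => //.
have Hle : vle (h0 *: X) (pbar n *: xs n).
  have -> : pbar n *: xs n = h0 *: ((1 + e) *: xs n).
    by rewrite scalerA /h0 mulfVK // gt_eqF.
  apply: vleZ; last exact: ltW.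
  move=> j; rewrite mxE; have [_ /(_ (xs_nonneg n j))[]] := Hn2 j => //.
case: (HT i) => _ _ mon.
have := mon _ _ (nonnegZ HX (ltW h00)) Hle; rewrite /= xs_T => HT1.
rewrite ler_pdivrMr //.
apply: le_trans HT1 _.
have -> : (1 + e) * (l + e) * (X 0 i + e) * h0 = (l + e) * (X 0 i + e) * pbar n.
  by rewrite /h0; field; rewrite gt_eqF.
have := Hn2 i => -[+ _]; rewrite ltr_norml => /andP[a b].
have Lp := lam_gt0 pn.
have v0 := xs_nonneg n i.
set L := lam (pbar n) in Hn1 Lp *.
set v := xs n 0 i in a b v0 *.
have l0 := l_ge0.
have H1 : 0 <= (l + e - L) * (pbar n * v) by apply: mulr_ge0; [lra | apply: mulr_ge0 => //; lra].
have H2 : 0 <= ((l + e) * pbar n) * (X 0 i + e - v) by apply: mulr_ge0; [apply: mulr_ge0; lra | lra].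
nra.
Qed.

Lemma ii_asym (i : 'I_N) : asymptotic_mapping T X i = (l * X 0 i)%:E.
Proof.
rewrite /asymptotic_mapping /asymptotic_fun.
set f := fun y : 'rV[R]_N => T y 0 i.
have Hsf : standard_interference f := HT i.
have l0 := l_ge0.
apply/eqP; rewrite eq_le; apply/andP; split.
- apply: (@le_trans _ _ (limn_einf (fun n : nat =>
      (ext_fun f (n%:R *: X) * ((n%:R)^-1)%:E)%E))).
    apply: ereal_inf_lbound; exists (fun n => n%:R), (fun _ => X); split => //.
      exact: cvgr_idn.
    exact: cvg_cst.
  have K0 : 0 <= l * X 0 i + 2 * l + 2 * X 0 i + 2.
    have := HX i; nra.
  apply: (helper_ub K0) => e e0 e1.
  have [h0 h00 Hh0] := ii_upper i e0 e1.
  apply: (@le_trans _ _ (f (h0 *: X) / h0)%:E).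
    apply: einf_le; apply: filterS (nbhs_infty_ger h0) => n hn.
    have np : 0 < (n%:R : R) by apply: lt_le_trans hn.
    rewrite /ext_fun asboolT; last by apply: nonnegZ => //; exact: ltW.
    rewrite -EFinM lee_fin.
    exact: ratio_dec Hsf HX h00 hn.
  rewrite lee_fin; apply: le_trans Hh0 _.
  have X0 := HX i.
  have t1 : 0 <= e * (1 - e) by apply: mulr_ge0; lra.
  have t2 : 0 <= e * (1 - e) * l by apply: mulr_ge0.
  have t3 : 0 <= e * (1 - e) * X 0 i by apply: mulr_ge0.
  have t4 : 0 <= e * (2 - e - e * e) by apply: mulr_ge0; nra.
  nra.
- apply: le_ereal_inf_tmp => _ [h [ys [hoo ysX ->]]].
  apply: helper_lb; first by apply: mulr_ge0 => //; exact: HX.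
  move=> e e0 e1.
  apply: einf_ge.
  have H2 : \forall n \near \oo, forall j,
      `|ys n 0 j - X 0 j| < e /\
      (0 <= ys n 0 j -> (1 - e) * X 0 j <= ys n 0 j /\ X 0 j <= (1 + e) * ys n 0 j).
    exact: ysX _ (nb_rel e0 e1).
  apply: filterS (filterI ((cvgryPgt _).1 hoo 0) H2) => n [hn Hn].
  rewrite /ext_fun; case: asboolP => Hnn; last first.
    by rewrite gt0_mulye ?leey // lte_fin invr_gt0.
  have ynn : nonneg (ys n).
    by move=> j; have := Hnn j; rewrite mxE pmulr_rge0.
  have h1 : 0 < h n * (1 - e) by rewrite mulr_gt0 // subr_gt0.
  have Hlow := ii_lower i h1.
  have Hle : vle ((h n * (1 - e)) *: X) (h n *: ys n).
    move=> j; rewrite !mxE -mulrA; apply: ler_wpM2l; first exact: ltW.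
    by have [] := (Hn j).2 (ynn j).
  have Hm2 := (let: And3 _ _ m := Hsf in m) _ _ (nonnegZ HX (ltW h1)) Hle.
  rewrite -EFinM lee_fin.
  rewrite ler_pdivlMr // in Hlow.
  rewrite -[X in _ <= X]/(f (h n *: ys n) / h n) ler_pdivlMr //.
  rewrite /f in Hm2 *; nra.
Qed.

End Clu.
Lemma ii_solves X : nonneg X -> cluster (xs @ \oo) X ->
  {within [set x | nonneg x], continuous T} -> solves_asymptotic T na X l.
Proof.
move=> HX HcX Hc; split => //; first exact: l_ge0.
  exact: ii_na HX HcX.
by move=> i; exact: (ii_asym HX HcX Hc).
Qed.

Lemma clu_nonneg z : cluster (xs @ \oo) z -> nonneg z.
Proof.
move=> Hz j; rewrite leNgt; apply/negP => zj.
have zj' : 0 < - z 0 j by rewrite oppr_gt0.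
have [n [_ Hn]] := clu_ex (P := fun _ => True) Hz (@filterT _ _ _) (nbhs_coord z j zj').
have := xs_nonneg n j; move: Hn; rewrite ltr_norml => /andP[a b]; lra.
Qed.

Lemma iii_main x' l' : {within [set x | nonneg x], continuous T} ->
  solves_asymptotic T na x' l' ->
  (forall x l0, solves_asymptotic T na x l0 -> x = x' /\ l0 = l') ->
  xs @ \oo --> x' /\ l' = l.
Proof.
move=> Hc [x'nn _ x'na _] Huniq.
have key (z : 'rV[R]_N) : cluster (xs @ \oo) z -> z = x' /\ l = l'.
  move=> Hz; exact: (Huniq z l (ii_solves (clu_nonneg Hz) Hz Hc)).
pose M j := (na (delta_mx 0 j))^-1.
pose V := [set v : 'rV[R]_N | forall j, `[-1, M j + 1]%classic (v ord0 j)].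
have cV : compact V.
  exact: (@rV_compact R N (fun j => `[-1, M j + 1]%classic)
    (fun j => @segment_compact R (-1) (M j + 1))).
have FV : (xs @ \oo) V.
  exists 0%N => // n _ j /=; rewrite in_itv /=; apply/andP; split.
    have := xs_nonneg n j; lra.
  have := coord_bound Hna j (xs_nonneg n) (xs_na n); rewrite /M; lra.
have [z [_ zc]] := cV _ _ FV.
have [zx ll] := key z zc.
split; last by [].
apply: (compact_cluster_set1 (@norm_hausdorff _ _) cV _ _ FV).
- have H : \forall y \near x', forall j, `|(y : 'rV[R]_N) 0 j - x' 0 j| < 1.
    exact: (@filter_forall _ _ (fun j (y : 'rV[R]_N) => `|y 0 j - x' 0 j| < 1) (nbhs x') _
      (fun j => nbhs_coord x' j ltr01)).
  apply: filterS H => y Hy j /=; rewrite in_itv /=.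
  have := Hy j; rewrite ltr_norml => /andP[a b].
  have := x'nn j; have := coord_bound Hna j x'nn x'na; rewrite /M.
  move=> c d; apply/andP; split; lra.
- apply/seteqP; split => w /=.
    by move=> /key [-> _].
  by move=> ->; rewrite -zx.
Qed.

End Seq.

End Main.

Unset Implicit Arguments. Set Strict Implicit. Set Printing Implicit Defensive.

Theorem proposition2 (R : realType) (N : nat)
  (T : 'rV[R]_N -> 'rV[R]_N) (na : 'rV[R]_N -> R)
  (pp : R -> 'rV[R]_N) (cc : R -> R) :
  standard_interference_mapping T ->
  monotone_norm na ->
  (* (pp pb, cc pb) is the (unique) solution of the budget problem, pb > 0 *)
  (forall pb, 0 < pb -> solves_budget T na pb (pp pb) (cc pb)) ->
  (* known facts about this solution (stated in the context) *)
  (forall pb, 0 < pb ->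
     [/\ positive (pp pb), 0 < cc pb, T (pp pb) = (cc pb)^-1 *: pp pb
       & na (pp pb) = pb]) ->
  (forall pb1 pb2, 0 < pb1 -> pb1 < pb2 -> cc pb1 < cc pb2) ->
  let lam := fun pb => (cc pb)^-1 in
  let lam_oo := lim (lam pb @[pb --> +oo]) in
  [/\
   (* (i) *)
   cvg (lam pb @[pb --> +oo]) /\ 0 <= lam_oo,
   (* (ii) *)
   {within [set x | nonneg x], continuous T} ->
   forall pbar : nat -> R,
     (forall n, 0 < pbar n) ->
     {homo pbar : n m / (n <= m)%N >-> n <= m} ->
     pbar @ \oo --> +oo ->
     let xs := fun n => (na (pp (pbar n)))^-1 *: pp (pbar n) in
     forall xinf, nonneg xinf -> cluster (xs @ \oo) xinf ->
       solves_asymptotic T na xinf lam_oo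
   &
   (* (iii) *)
   {within [set x | nonneg x], continuous T} ->
   forall pbar : nat -> R,
     (forall n, 0 < pbar n) ->
     {homo pbar : n m / (n <= m)%N >-> n <= m} ->
     pbar @ \oo --> +oo ->
     let xs := fun n => (na (pp (pbar n)))^-1 *: pp (pbar n) in
     forall x' l', solves_asymptotic T na x' l' ->
       (forall x l, solves_asymptotic T na x l -> x = x' /\ l = l') ->
       positive x' -> 0 < l' ->
       xs @ \oo --> x' /\ l' = lam_oo].

Proof.
move=> HT Hna Hsol Hf Hm lam lam_oo.
have Hl : lam_oo = inf [set lam pb | pb in [set pb : R | 0 < pb]] := lim_lam Hf Hm.
split.
- split; first exact: cvgP (lam_cvg Hf Hm).
  by rewrite Hl; exact: (l_ge0 Hf).
- move=> Hc pbar p0 _ poo xs X HX HcX.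
  rewrite Hl; exact: (ii_solves HT Hna Hf Hm p0 poo HX HcX Hc).
- move=> Hc pbar p0 _ poo xs x' l' Hs Hu _ _.
  rewrite Hl; exact: (iii_main HT Hna Hf Hm p0 poo Hc Hs Hu).
Qed.
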